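(* Let $\nu_1,\dots,\nu_p>0$ and let $\eta_1,\dots,\eta_p$ be independent random variables with $\eta_j\sim\mathcal P(\nu_j)$ (Poisson with mean $\nu_j$). Set $\boldsymbol\eta=(\eta_1,\dots,\eta_p)$, $\boldsymbol\nu=(\nu_1,\dots,\nu_p)$ and $\nu_\infty=\max_j\nu_j$. Then for every $u$ satisfying $\nu_\infty^{-3/2}\le u\le 0.9\,\nu_\infty^{3/2}$, $$\mathbf P\Big(\|\boldsymbol\eta-\boldsymbol\nu\|_2^2-\|\boldsymbol\eta\|_1\ge \nu_\infty\sqrt p\,u\Big)\le(2p+1)e^{-cu^{2/3}},$$ where $c\ge 0.38$ is a universal constant (one may take $c=12^{1/3}/6$).
   Context: $\|\cdot\|_2$ and $\|\cdot\|_1$ are the Euclidean and $\ell_1$ norms on $\mathbb R^p$. *)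

(* Defs.v *)
From Stdlib Require Import Reals List Arith Factorial.
Import ListNotations.
Open Scope R_scope.

Definition sumR (l : list R) : R := fold_right Rplus 0 l.
Definition prodR (l : list R) : R := fold_right Rmult 1 l.

Definition poisson_pmf (nu : R) (k : nat) : R := exp (- nu) * nu ^ k / INR (Factorial.fact k).

(* An outcome of eta = (eta_0,...,eta_{p-1}) is a list k of naturals of length p;
   eta_j = nth j k 0.  nu : nat -> R gives nu_j for j < p. *)

Definition joint_pmf (p : nat) (nu : nat -> R) (k : list nat) : R :=
  prodR (map (fun j => poisson_pmf (nu j) (nth j k 0%nat)) (seq 0 p)).

Fixpoint box (p N : nat) : list (list nat) :=
  match p with
  | O => [[]]
  | S p' => flat_map (fun a => map (cons a) (box p' N)) (seq 0 (S N))
  end.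

(* P(eta in E) <= b, where P(eta in E) = sum over k in N^p with E k of joint_pmf k.
   Since all terms are nonnegative, this (countable) sum is <= b iff every
   finite partial sum over a box {0..N}^p is <= b. *)
Definition prob_le (p : nat) (nu : nat -> R) (E : list nat -> Prop)
  (decE : forall k, {E k} + {~ E k}) (b : R) : Prop :=
  forall N : nat,
    sumR (map (fun k => if decE k then joint_pmf p nu k else 0) (box p N)) <= b.

Definition stat (p : nat) (nu : nat -> R) (k : list nat) : R :=
  sumR (map (fun j => (INR (nth j k 0%nat) - nu j) ^ 2) (seq 0 p))
  - sumR (map (fun j => INR (nth j k 0%nat)) (seq 0 p)).

(* nu_infty = max_j nu_j (for p >= 1 and nu_j > 0) *)
Definition nu_inf (p : nat) (nu : nat -> R) : R :=
  fold_right Rmax 0 (map nu (seq 0 p)).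

Definition stat_ge_dec (p : nat) (nu : nat -> R) (t : R) (k : list nat)
  : {t <= stat p nu k} + {~ t <= stat p nu k} := Rle_dec t (stat p nu k).

(* Main.v *)
Require Import Defs.
From Stdlib Require Import Reals List Lra Lia Psatz Arith Factorial.
From Coquelicot Require Import Coquelicot.
Import ListNotations.
Open Scope R_scope.


Lemma sumR_app l1 l2 : sumR (l1 ++ l2) = sumR l1 + sumR l2.
Proof. induction l1; simpl; [lra| rewrite IHl1; lra]. Qed.

Lemma sumR_map_plus {A} (f g : A -> R) l :
  sumR (map (fun x => f x + g x) l) = sumR (map f l) + sumR (map g l).
Proof. induction l; simpl; [lra| rewrite IHl; lra]. Qed.

Lemma sumR_map_minus {A} (f g : A -> R) l :
  sumR (map f l) - sumR (map g l) = sumR (map (fun x => f x - g x) l).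
Proof. induction l; simpl; [lra| rewrite <- IHl; lra]. Qed.

Lemma sumR_map_scal {A} (c : R) (f : A -> R) l :
  sumR (map (fun x => c * f x) l) = c * sumR (map f l).
Proof. induction l; simpl; [lra| rewrite IHl; lra]. Qed.

Lemma sumR_map_le {A} (f g : A -> R) l :
  (forall x, In x l -> f x <= g x) -> sumR (map f l) <= sumR (map g l).
Proof. induction l; simpl; intros H; [lra|].
  assert (f a <= g a) by auto. assert (sumR (map f l) <= sumR (map g l)) by auto. lra. Qed.

Lemma sumR_map_nonneg {A} (f : A -> R) l :
  (forall x, In x l -> 0 <= f x) -> 0 <= sumR (map f l).
Proof. induction l; simpl; intros H; [lra|].
  assert (0 <= f a) by auto. assert (0 <= sumR (map f l)) by auto. lra. Qed.

Lemma sumR_map_ext {A} (f g : A -> R) l :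
  (forall x, In x l -> f x = g x) -> sumR (map f l) = sumR (map g l).
Proof. intros H; f_equal; apply map_ext_in; auto. Qed.

Lemma sumR_flat_map {A B} (g : A -> list B) (f : B -> R) l :
  sumR (map f (flat_map g l)) = sumR (map (fun a => sumR (map f (g a))) l).
Proof. induction l; simpl; [lra|]. rewrite map_app, sumR_app, IHl. lra. Qed.

Lemma prodR_map_mult {A} (f g : A -> R) l :
  prodR (map (fun x => f x * g x) l) = prodR (map f l) * prodR (map g l).
Proof. induction l; simpl; [lra| rewrite IHl; lra]. Qed.

Lemma prodR_map_nonneg {A} (f : A -> R) l :
  (forall x, In x l -> 0 <= f x) -> 0 <= prodR (map f l).
Proof. induction l; simpl; intros H; [lra|].
  assert (0 <= f a) by auto. assert (0 <= prodR (map f l)) by auto. nra. Qed.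

Lemma prodR_map_le {A} (f g : A -> R) l :
  (forall x, In x l -> 0 <= f x <= g x) -> prodR (map f l) <= prodR (map g l).
Proof. induction l; simpl; intros H; [lra|].
  assert (0 <= f a <= g a) by auto.
  assert (prodR (map f l) <= prodR (map g l)) by auto.
  assert (0 <= prodR (map f l)) by (apply prodR_map_nonneg; intros; apply H; auto).
  nra. Qed.

Lemma sumR_seq_S (f : nat -> R) n :
  sumR (map f (seq 0 (S n))) = sumR (map f (seq 0 n)) + f n.
Proof. rewrite seq_S, map_app, sumR_app. simpl. lra. Qed.

Lemma prodR_cons x l : prodR (x :: l) = x * prodR l.
Proof. reflexivity. Qed.
Lemma sumR_cons x l : sumR (x :: l) = x + sumR l.
Proof. reflexivity. Qed.

Lemma box_prod : forall p N (F : nat -> nat -> R),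
  sumR (map (fun k => prodR (map (fun j => F j (nth j k 0%nat)) (seq 0 p))) (box p N))
  = prodR (map (fun j => sumR (map (F j) (seq 0 (S N)))) (seq 0 p)).
Proof.
  induction p; intros N F.
  - simpl. lra.
  - replace (box (S p) N) with (flat_map (fun a => map (cons a) (box p N)) (seq 0 (S N))) by reflexivity.
    rewrite sumR_flat_map.
    replace (seq 0 (S p)) with (0%nat :: map S (seq 0 p)) by (simpl; rewrite seq_shift; reflexivity).
    transitivity (sumR (map (fun a => F 0%nat a *
        sumR (map (fun k => prodR (map (fun j => F (S j) (nth j k 0%nat)) (seq 0 p))) (box p N)))
        (seq 0 (S N)))).
    + apply sumR_map_ext. intros a _. rewrite map_map.
      rewrite <- sumR_map_scal. apply sumR_map_ext. intros k _.
      simpl. rewrite !map_map. reflexivity.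
    + rewrite (IHp N (fun j => F (S j))).
      cbn [map]. rewrite prodR_cons, map_map.
      set (K := prodR _).
      transitivity (sumR (map (fun x => K * F 0%nat x) (seq 0 (S N)))).
      * apply sumR_map_ext; intros; lra.
      * rewrite sumR_map_scal. lra.
Qed.


Lemma exp_INR_mult (t : R) (m : nat) : exp (t * INR m) = exp t ^ m.
Proof. induction m. simpl. rewrite Rmult_0_r, exp_0. reflexivity.
  rewrite S_INR, Rmult_plus_distr_l, exp_plus, IHm, Rmult_1_r. simpl. ring. Qed.

Lemma pmf_nonneg nu m : 0 <= nu -> 0 <= poisson_pmf nu m.
Proof. intros H. unfold poisson_pmf. apply Rmult_le_pos.
  apply Rmult_le_pos. left; apply exp_pos. apply pow_le; auto.
  left. apply Rinv_0_lt_compat. apply lt_0_INR. apply lt_O_fact. Qed.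

Lemma pmf_S nu m : poisson_pmf nu (S m) = poisson_pmf nu m * nu / INR (S m).
Proof. unfold poisson_pmf. rewrite fact_simpl, mult_INR.
  assert (0 < INR (fact m)) by (apply lt_0_INR, lt_O_fact).
  assert (0 < INR (S m)) by (apply lt_0_INR; lia).
  simpl pow. field. lra. Qed.

Lemma exp_le x y : x <= y -> exp x <= exp y.
Proof. intros [H|H]. left; apply exp_increasing; auto. subst; lra. Qed.

Definition S1 (f : nat -> R) (nu : R) (N : nat) :=
  sumR (map (fun m => f m * poisson_pmf nu m) (seq 0 (S N))).

Lemma sumR_sum_f (f : nat -> R) N : sumR (map f (seq 0 (S N))) = sum_f_R0 f N.
Proof. induction N. simpl. lra. rewrite sumR_seq_S, IHN. simpl. reflexivity. Qed.

Lemma S1_exp_bound nu N (a : R) : 0 <= nu ->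
  S1 (fun m => exp (a * INR m)) nu N <= exp (nu * exp a - nu).
Proof. intros Hnu. unfold S1.
  transitivity (exp (- nu) * sum_f_R0 (fun m => (nu * exp a) ^ m / INR (fact m)) N).
  - right. rewrite <- sumR_sum_f, <- sumR_map_scal. apply sumR_map_ext. intros m _.
    rewrite exp_INR_mult. unfold poisson_pmf. rewrite Rpow_mult_distr. unfold Rdiv. ring.
  - replace (nu * exp a - nu) with (- nu + nu * exp a) by ring. rewrite exp_plus.
    apply Rmult_le_compat_l. left; apply exp_pos. apply exp_ge_taylor.
    apply Rmult_le_pos; auto. left; apply exp_pos. Qed.

Lemma S1_one nu N : 0 <= nu -> S1 (fun _ => 1) nu N <= 1.
Proof. intros H. transitivity (S1 (fun m => exp (0 * INR m)) nu N).
  right. unfold S1. apply sumR_map_ext; intros. rewrite Rmult_0_l, exp_0. reflexivity.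
  eapply Rle_trans. apply S1_exp_bound; auto. rewrite exp_0. right.
  replace (nu * 1 - nu) with 0 by ring. apply exp_0. Qed.

Lemma S1_le f g nu N : 0 <= nu -> (forall m, f m <= g m) -> S1 f nu N <= S1 g nu N.
Proof. intros Hnu H. unfold S1. apply sumR_map_le. intros m _.
  apply Rmult_le_compat_r. apply pmf_nonneg; auto. auto. Qed.

Lemma S1_nonneg f nu N : 0 <= nu -> (forall m, 0 <= f m) -> 0 <= S1 f nu N.
Proof. intros Hnu H. unfold S1. apply sumR_map_nonneg. intros m _.
  apply Rmult_le_pos; auto. apply pmf_nonneg; auto. Qed.

Lemma S1_scal c f nu N : S1 (fun m => c * f m) nu N = c * S1 f nu N.
Proof. unfold S1. rewrite <- sumR_map_scal. apply sumR_map_ext; intros; ring. Qed.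

Lemma tail_up nu N s th : 0 <= nu -> 0 <= th ->
  S1 (fun m => if Rle_dec s (INR m - nu) then 1 else 0) nu N
  <= exp (nu * (exp th - 1 - th) - th * s).
Proof. intros Hnu Hth.
  transitivity (S1 (fun m => exp (- th * nu - th * s) * exp (th * INR m)) nu N).
  - apply S1_le; auto. intros m. rewrite <- exp_plus.
    destruct (Rle_dec s (INR m - nu)).
    + rewrite <- exp_0 at 1. apply exp_le. nra.
    + left; apply exp_pos.
  - rewrite S1_scal. eapply Rle_trans. apply Rmult_le_compat_l. left; apply exp_pos.
    apply S1_exp_bound; auto. rewrite <- exp_plus. apply exp_le. nra. Qed.

Lemma tail_lo nu N s th : 0 <= nu -> 0 <= th ->
  S1 (fun m => if Rle_dec (INR m - nu) (- s) then 1 else 0) nu N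
  <= exp (nu * (exp (- th) - 1 + th) - th * s).
Proof. intros Hnu Hth.
  transitivity (S1 (fun m => exp (th * nu - th * s) * exp (- th * INR m)) nu N).
  - apply S1_le; auto. intros m. rewrite <- exp_plus.
    destruct (Rle_dec (INR m - nu) (- s)).
    + rewrite <- exp_0 at 1. apply exp_le. nra.
    + left; apply exp_pos.
  - rewrite S1_scal. eapply Rle_trans. apply Rmult_le_compat_l. left; apply exp_pos.
    apply S1_exp_bound; auto. rewrite <- exp_plus. apply exp_le.
    replace (- th) with (- th) by ring. nra. Qed.


Lemma Derive_n_exp n : forall x, Derive_n exp n x = exp x.
Proof. induction n; intros x. reflexivity.
  simpl. rewrite (Derive_ext _ exp). apply is_derive_unique. apply is_derive_exp.
  exact IHn. Qed.

Lemma ex_derive_n_exp k t : ex_derive_n exp k t.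
Proof. destruct k. simpl. exact I. simpl.
  apply (ex_derive_ext exp). intros; symmetry; apply Derive_n_exp.
  eexists. apply is_derive_exp. Qed.

Lemma exp_taylor n x : 0 < x -> exists z, 0 < z < x /\
  exp x = sum_f_R0 (fun m => x ^ m / INR (fact m)) n + x ^ S n / INR (fact (S n)) * exp z.
Proof. intros Hx. destruct (Taylor_Lagrange exp n 0 x Hx) as [z [Hz E]].
  { intros; apply ex_derive_n_exp. }
  exists z. split; auto. rewrite E. rewrite Derive_n_exp. f_equal.
  apply sum_eq. intros i _. rewrite Derive_n_exp, exp_0, Rminus_0_r. ring.
  rewrite Rminus_0_r. reflexivity. Qed.

Lemma E1 x : 0 <= x <= 1 -> exp x <= 1 + x + x^2/2 + x^3/6 + x^4/24 + x^5/40.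
Proof. intros [H0 H1]. destruct H0 as [H0|H0].
  - destruct (exp_taylor 4 x H0) as [z [Hz E]]. rewrite E.
    assert (exp z <= 3). { eapply Rle_trans. apply exp_le. instantiate (1:=1). lra. apply exp_le_3. }
    simpl sum_f_R0. simpl fact. simpl INR.
    assert (0 <= x^5) by (apply pow_le; lra).
    assert (x ^ 5 / 120 * exp z <= x^5 / 40).
    { assert (0 < exp z) by apply exp_pos. unfold Rdiv. nra. }
    simpl in *. lra.
  - subst. rewrite exp_0. simpl. lra. Qed.

Lemma E2 y : 0 <= y -> exp y <= 1 + y + y^2/2 * exp y.
Proof. intros [H|H].
  - destruct (exp_taylor 1 y H) as [z [Hz E]]. rewrite E at 1.
    assert (exp z <= exp y) by (apply exp_le; lra).
    simpl. assert (0 <= y*y) by nra. nra.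
  - subst. rewrite exp_0. simpl. lra. Qed.

Lemma E3 t : 0 <= t -> exp (- t) <= 1 - t + t^2/2.
Proof. intros H. rewrite exp_Ropp.
  assert (h := exp_ge_taylor t 2 H). simpl in h.
  assert (1 + t + t^2/2 <= exp t) by (simpl; lra).
  assert (0 < 1 + t + t^2/2) by nra.
  apply (Rmult_le_reg_l (exp t)). apply exp_pos.
  rewrite Rinv_r by (apply Rgt_not_eq, exp_pos).
  assert (1 <= (1 + t + t^2/2) * (1 - t + t^2/2)) by nra.
  assert (0 <= 1 - t + t^2/2) by nra.
  nra. Qed.

Lemma exp_16 : exp (16/10) <= 498/100.
Proof. replace (16/10) with (8/10 + 8/10) by lra. rewrite exp_plus.
  assert (h := E1 (8/10) ltac:(lra)). assert (0 < exp (8/10)) by apply exp_pos.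
  simpl in h. nra. Qed.

Lemma exp_106 : exp (106/100) <= 3.
Proof. replace (106/100) with (53/100 + 53/100) by lra. rewrite exp_plus.
  assert (h := E1 (53/100) ltac:(lra)). assert (0 < exp (53/100)) by apply exp_pos.
  simpl in h. nra. Qed.

Lemma Bern y : y <= 16/10 -> exp y <= 1 + y + 249/100 * y ^ 2.
Proof. intros Hy. destruct (Rle_dec 0 y).
  - eapply Rle_trans. apply E2; auto.
    assert (exp y <= 498/100). { eapply Rle_trans. apply exp_le. apply Hy. apply exp_16. }
    assert (0 <= y^2) by (apply pow2_ge_0). nra.
  - replace y with (- (- y)) by ring. eapply Rle_trans. apply E3. lra.
    assert (0 <= (-y)^2) by (apply pow2_ge_0). simpl in *. nra. Qed.

Lemma phi_up th : 0 <= th <= 1 ->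
  exp th - 1 - th <= th^2/2 + th^3/6 + th^4/24 + th^5/40.
Proof. intros H. assert (h := E1 th H). lra. Qed.

Lemma phi_lo th : 0 <= th -> exp (- th) - 1 + th <= th^2/2.
Proof. intros H. assert (h := E3 th H). lra. Qed.


Definition Xf (nu : R) (m : nat) : R := (INR m - nu) ^ 2 - INR m.

Lemma S1_mono f nu N N' : 0 <= nu -> (forall m, 0 <= f m) -> (N <= N')%nat ->
  S1 f nu N <= S1 f nu N'.
Proof. intros Hnu Hf HN. induction HN. lra.
  eapply Rle_trans. apply IHHN. unfold S1. rewrite (sumR_seq_S _ (S m)).
  assert (0 <= f (S m) * poisson_pmf nu (S m)). apply Rmult_le_pos; auto. apply pmf_nonneg; auto.
  lra. Qed.

Lemma S1_plus f g nu N : S1 (fun m => f m + g m) nu N = S1 f nu N + S1 g nu N.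
Proof. unfold S1. rewrite <- sumR_map_plus. apply sumR_map_ext; intros; ring. Qed.

Definition Gf nu m := nu * poisson_pmf nu m * (nu - INR m).

Lemma step1 nu n : 0 < nu ->
  Xf nu (S n) * poisson_pmf nu (S n) = Gf nu (S n) - Gf nu n.
Proof. intros Hnu. unfold Gf, Xf.
  assert (H : poisson_pmf nu n = poisson_pmf nu (S n) * INR (S n) / nu).
  { rewrite pmf_S. assert (0 < INR (S n)) by (apply lt_0_INR; lia). field. lra. }
  rewrite H. rewrite S_INR. field. lra. Qed.

Lemma base1 nu : Xf nu 0 * poisson_pmf nu 0 = Gf nu 0.
Proof. unfold Xf, Gf. simpl. ring. Qed.

Lemma telesc_good nu (good : nat -> bool) :
  0 < nu ->
  (forall n, good n = true -> good (S n) = false -> Gf nu n <= 0) ->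
  (forall n, good n = false -> good (S n) = true -> 0 <= Gf nu n) ->
  forall n, S1 (fun m => (if good m then 1 else 0) * Xf nu m) nu n
            <= if good n then Gf nu n else 0.
Proof. intros Hnu H1 H2. induction n.
  - unfold S1. change (seq 0 1) with [0%nat]. cbn [map]. rewrite sumR_cons. change (sumR []) with 0.
    rewrite Rmult_assoc, base1. destruct (good 0%nat); lra.
  - unfold S1 in *. rewrite sumR_seq_S. rewrite Rmult_assoc, step1; auto.
    destruct (good n) eqn:E1; destruct (good (S n)) eqn:E2.
    + lra.
    + specialize (H1 n E1 E2). lra.
    + specialize (H2 n E1 E2). lra.
    + lra. Qed.

Definition Qf nu (m : nat) := - nu * ((INR m - nu) ^ 3 + INR m * (INR m - nu) + 2 * nu).

Lemma sq_identity nu n : 0 < nu ->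
  S1 (fun m => Xf nu m ^ 2) nu n = 2 * nu ^ 2 * S1 (fun _ => 1) nu n + poisson_pmf nu n * Qf nu n.
Proof. intros Hnu. induction n.
  - unfold S1, Xf, Qf. simpl. ring.
  - unfold S1 in *. rewrite (sumR_seq_S (fun m => Xf nu m ^ 2 * poisson_pmf nu m) (S n)), (sumR_seq_S (fun m => 1 * poisson_pmf nu m) (S n)), IHn.
    assert (H : poisson_pmf nu n = poisson_pmf nu (S n) * INR (S n) / nu).
    { rewrite pmf_S. assert (0 < INR (S n)) by (apply lt_0_INR; lia). field. lra. }
    rewrite H. unfold Xf, Qf. rewrite S_INR. field. lra. Qed.

Lemma middle nu N A lam mu B :
  0 < nu -> 1 <= A -> 0 <= lam -> lam * A ^ 2 <= mu -> 0 <= B ->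
  (forall y, y <= mu -> exp y <= 1 + y + B * y ^ 2) ->
  S1 (fun m => if Rlt_dec (Rabs (INR m - nu)) A then exp (lam * Xf nu m) else 0) nu N
  <= 1 + 2 * B * lam ^ 2 * nu ^ 2.
Proof.
  intros Hnu HA Hl Hm HB HE.
  destruct (INR_unbounded (nu + A + INR N)) as [N0 HN0].
  assert (HNN : (N <= N0)%nat). { apply INR_le. assert (0 <= nu) by lra. lra. }
  eapply Rle_trans. apply (S1_mono _ _ _ N0); try lra; auto.
  { intros m. destruct Rlt_dec. left; apply exp_pos. lra. }
  set (good := fun m => if Rlt_dec (Rabs (INR m - nu)) A then true else false).
  assert (HN0g : good N0 = false).
  { unfold good. destruct Rlt_dec; auto. exfalso. apply Rabs_def2 in r.
    assert (0 <= INR N) by apply pos_INR. lra. }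
  assert (Hpt : forall m, (if Rlt_dec (Rabs (INR m - nu)) A then exp (lam * Xf nu m) else 0)
     <= (if good m then 1 else 0) + lam * ((if good m then 1 else 0) * Xf nu m)
        + B * lam ^ 2 * Xf nu m ^ 2).
  { intros m. unfold good. destruct Rlt_dec as [r|r].
    - eapply Rle_trans. apply HE.
      + apply Rabs_def2 in r. unfold Xf.
        assert (0 <= INR m) by apply pos_INR.
        assert ((INR m - nu) ^ 2 <= A ^ 2). { simpl. nra. }
        nra.
      + right. ring.
    - assert (0 <= B * lam ^ 2 * Xf nu m ^ 2). { apply Rmult_le_pos. apply Rmult_le_pos; auto. apply pow_le; auto. apply pow2_ge_0. }
      lra. }
  eapply Rle_trans. apply S1_le. lra. apply Hpt.
  rewrite !S1_plus, S1_scal, (S1_scal (B * lam ^ 2)).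
  assert (T1 : S1 (fun m => if good m then 1 else 0) nu N0 <= 1).
  { eapply Rle_trans. apply (S1_le _ (fun _ => 1)). lra. intros m; destruct (good m); lra.
    apply S1_one; lra. }
  assert (T2 : S1 (fun m => (if good m then 1 else 0) * Xf nu m) nu N0 <= 0).
  { eapply Rle_trans. apply telesc_good; auto.
    - intros n G1 G2. unfold good in G1, G2. destruct Rlt_dec as [r1|r1]; try discriminate.
      destruct Rlt_dec as [r2|r2]; try discriminate. apply Rabs_def2 in r1.
      rewrite S_INR in r2. unfold Gf.
      assert (nu <= INR n).
      { destruct (Rle_dec 0 (INR n + 1 - nu)).
        - rewrite Rabs_right in r2; lra.
        - rewrite Rabs_left in r2; lra. }
      assert (0 <= poisson_pmf nu n) by (apply pmf_nonneg; lra).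
      assert (0 <= nu * poisson_pmf nu n) by (apply Rmult_le_pos; lra). nra.
    - intros n G1 G2. unfold good in G1, G2. destruct Rlt_dec as [r1|r1]; try discriminate.
      destruct Rlt_dec as [r2|r2]; try discriminate. apply Rabs_def2 in r2.
      rewrite S_INR in r2. unfold Gf.
      assert (INR n <= nu).
      { destruct (Rle_dec 0 (INR n - nu)).
        - rewrite Rabs_right in r1; lra.
        - lra. }
      assert (0 <= poisson_pmf nu n) by (apply pmf_nonneg; lra).
      assert (0 <= nu * poisson_pmf nu n) by (apply Rmult_le_pos; lra). nra.
    - rewrite HN0g. lra. }
  assert (T3 : S1 (fun m => Xf nu m ^ 2) nu N0 <= 2 * nu ^ 2).
  { rewrite sq_identity; auto.
    assert (S1 (fun _ => 1) nu N0 <= 1) by (apply S1_one; lra).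
    assert (poisson_pmf nu N0 * Qf nu N0 <= 0).
    { assert (0 <= poisson_pmf nu N0) by (apply pmf_nonneg; lra).
      assert (Qf nu N0 <= 0).
      { unfold Qf. assert (0 <= INR N) by apply pos_INR.
        assert (0 <= INR N0 - nu) by lra.
        assert (0 <= (INR N0 - nu) ^ 3) by (apply pow_le; lra).
        assert (0 <= INR N0 * (INR N0 - nu)) by nra. nra. }
      nra. }
    assert (0 <= nu ^ 2) by apply pow2_ge_0. nra. }
  assert (0 <= B * lam ^ 2) by (apply Rmult_le_pos; auto; apply pow2_ge_0).
  nra.
Qed.


Definition Ex p nu N (g : list nat -> R) :=
  sumR (map (fun k => g k * joint_pmf p nu k) (box p N)).

Section S.
Variable p : nat.
Variable nu : nat -> R.
Hypothesis Hnu : forall j, (j < p)%nat -> 0 < nu j.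

Lemma joint_nonneg k : 0 <= joint_pmf p nu k.
Proof. unfold joint_pmf. apply prodR_map_nonneg. intros j Hj.
  apply in_seq in Hj. apply pmf_nonneg. left; apply Hnu; lia. Qed.

Lemma Ex_le N g1 g2 : (forall k, g1 k <= g2 k) -> Ex p nu N g1 <= Ex p nu N g2.
Proof. intros H. unfold Ex. apply sumR_map_le. intros k _.
  apply Rmult_le_compat_r. apply joint_nonneg. auto. Qed.

Lemma Ex_plus N g1 g2 : Ex p nu N (fun k => g1 k + g2 k) = Ex p nu N g1 + Ex p nu N g2.
Proof. unfold Ex. rewrite <- sumR_map_plus. apply sumR_map_ext; intros; ring. Qed.

Lemma Ex_scal N a g : Ex p nu N (fun k => a * g k) = a * Ex p nu N g.
Proof. unfold Ex. rewrite <- sumR_map_scal. apply sumR_map_ext; intros; ring. Qed.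

Lemma Ex_sumlist N (h : nat -> list nat -> R) l :
  Ex p nu N (fun k => sumR (map (fun j => h j k) l)) = sumR (map (fun j => Ex p nu N (h j)) l).
Proof. induction l.
  - unfold Ex. simpl. transitivity (sumR (map (fun _ => 0) (box p N))).
    apply sumR_map_ext; intros; ring. clear. induction (box p N); simpl; lra.
  - simpl. rewrite Ex_plus, IHl. reflexivity. Qed.

Lemma Ex_prod N (f : nat -> nat -> R) :
  Ex p nu N (fun k => prodR (map (fun j => f j (nth j k 0%nat)) (seq 0 p)))
  = prodR (map (fun j => S1 (f j) (nu j) N) (seq 0 p)).
Proof. unfold Ex, joint_pmf.
  transitivity (sumR (map (fun k => prodR (map (fun j => (fun j m => f j m * poisson_pmf (nu j) m) j (nth j k 0%nat)) (seq 0 p))) (box p N))).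
  - apply sumR_map_ext. intros k _. rewrite <- prodR_map_mult. reflexivity.
  - exact (box_prod p N (fun j m => f j m * poisson_pmf (nu j) m)). Qed.

Lemma fold_right_Rmult_z z l : fold_right Rmult z l = fold_right Rmult 1 l * z.
Proof. induction l; simpl; [ring| rewrite IHl; ring]. Qed.

Lemma prod_single_eq (j0 : nat) (a : R) : forall q, (j0 < q)%nat ->
  prodR (map (fun j => if Nat.eqb j j0 then a else 1) (seq 0 q)) = a.
Proof. assert (Hall : forall q, (q <= j0)%nat -> prodR (map (fun j => if Nat.eqb j j0 then a else 1) (seq 0 q)) = 1).
  { induction q; intros Hq. reflexivity. rewrite seq_S, map_app. unfold prodR in *.
    rewrite fold_right_app. simpl. replace (Nat.eqb q j0) with false. rewrite Rmult_1_l. apply IHq; lia.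
    symmetry. apply Nat.eqb_neq. lia. }
  induction q; intros Hq. lia. rewrite seq_S, map_app. unfold prodR in *.
  rewrite fold_right_app. simpl. destruct (Nat.eqb_spec q j0).
  - subst. rewrite fold_right_Rmult_z. rewrite Hall; [ring|lia].
  - rewrite Rmult_1_l. apply IHq. lia. Qed.

Lemma prod_single_le (j0 : nat) (a : R) (y : nat -> R) : forall q, (j0 < q)%nat -> 0 <= a ->
  (forall j, 0 <= y j <= 1) ->
  prodR (map (fun j => if Nat.eqb j j0 then a else y j) (seq 0 q)) <= a.
Proof. intros q Hq Ha Hy. eapply Rle_trans; [| right; apply (prod_single_eq j0 a q Hq)].
  apply prodR_map_le. intros j _. destruct (Nat.eqb j j0). lra. apply Hy. Qed.

Lemma coord_eval (j0 : nat) (h : nat -> R) (k : list nat) : (j0 < p)%nat ->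
  prodR (map (fun j => (if Nat.eqb j j0 then h else fun _ => 1) (nth j k 0%nat)) (seq 0 p)) = h (nth j0 k 0%nat).
Proof. intros H. rewrite <- (prod_single_eq j0 (h (nth j0 k 0%nat)) p H). f_equal.
  apply map_ext. intros j. destruct (Nat.eqb_spec j j0). subst; reflexivity. reflexivity. Qed.

Lemma Ex_coord N (h : nat -> nat -> R) :
  (forall j m, 0 <= h j m) ->
  Ex p nu N (fun k => sumR (map (fun j => h j (nth j k 0%nat)) (seq 0 p)))
  <= sumR (map (fun j => S1 (h j) (nu j) N) (seq 0 p)).
Proof. intros Hh. rewrite Ex_sumlist. apply sumR_map_le. intros j Hj. apply in_seq in Hj.
  assert (Hj' : (j < p)%nat) by lia.
  transitivity (Ex p nu N (fun k => prodR (map (fun i => (if Nat.eqb i j then h j else fun _ => 1) (nth i k 0%nat)) (seq 0 p)))).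
  { right. unfold Ex. apply sumR_map_ext. intros k _. rewrite coord_eval; auto. }
  rewrite Ex_prod.
  transitivity (prodR (map (fun i => if Nat.eqb i j then S1 (h j) (nu j) N else S1 (fun _ => 1) (nu i) N) (seq 0 p))).
  { right. f_equal. apply map_ext_in. intros i Hi. destruct (Nat.eqb_spec i j). subst; reflexivity. reflexivity. }
  transitivity (prodR (map (fun i => if Nat.eqb i j then S1 (h j) (nu j) N else (fun i => if lt_dec i p then S1 (fun _ => 1) (nu i) N else 1) i) (seq 0 p))).
  { right. f_equal. apply map_ext_in. intros i Hi. apply in_seq in Hi. destruct (Nat.eqb i j); auto. destruct lt_dec; auto. lia. }
  apply prod_single_le; auto.
  - apply S1_nonneg; auto. left; apply Hnu; auto.
  - intros i. destruct lt_dec. split. apply S1_nonneg. left; apply Hnu; auto. intros; lra.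
    apply S1_one. left; apply Hnu; auto. lra.
Qed.

End S.


Lemma sumR_const {T} a (l : list T) : sumR (map (fun _ => a) l) = INR (length l) * a.
Proof. induction l. simpl; ring. simpl length. rewrite S_INR. simpl. rewrite IHl. ring. Qed.

Lemma prodR_const {T} a (l : list T) : prodR (map (fun _ => a) l) = a ^ (length l).
Proof. induction l. reflexivity. simpl. rewrite <- IHl. reflexivity. Qed.

Lemma sumR_lt1 {T} (F : T -> R) l : (forall x, In x l -> 0 <= F x) -> sumR (map F l) < 1 ->
  forall x, In x l -> F x < 1.
Proof. induction l; simpl; intros H0 H x Hx. destruct Hx.
  assert (0 <= sumR (map F l)) by (apply sumR_map_nonneg; auto).
  assert (0 <= F a) by auto.
  destruct Hx. subst; lra. apply IHl; auto. lra. Qed.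

Lemma sumR_lt_p (F : nat -> R) a p : (1 <= p)%nat -> (forall j, (j < p)%nat -> F j < a) ->
  sumR (map F (seq 0 p)) < INR p * a.
Proof. intros Hp H. induction p. lia. rewrite seq_S, map_app, sumR_app.
  change (sumR (map F [(0 + p)%nat])) with (F (0+p)%nat + 0). simpl (0 + p)%nat.
  rewrite S_INR. destruct p.
  - simpl. assert (F 0%nat < a) by (apply H; lia). lra.
  - assert (sumR (map F (seq 0 (S p))) < INR (S p) * a) by (apply IHp; intros; [lia| apply H; lia]).
    assert (F (S p) < a) by (apply H; lia). lra. Qed.

Lemma stat_sum p nu k : stat p nu k = sumR (map (fun j => Xf (nu j) (nth j k 0%nat)) (seq 0 p)).
Proof. unfold stat. rewrite sumR_map_minus. reflexivity. Qed.

Lemma exp_sumR (h : nat -> R) l : exp (sumR (map h l)) = prodR (map (fun j => exp (h j)) l).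
Proof. induction l; simpl. apply exp_0. rewrite exp_plus, IHl. reflexivity. Qed.

Lemma prob_le_Ex p nu N t (g : list nat -> R) :
  (forall j, (j < p)%nat -> 0 < nu j) ->
  (forall k, 0 <= g k) -> (forall k, t <= stat p nu k -> 1 <= g k) ->
  sumR (map (fun k => if Rle_dec t (stat p nu k) then joint_pmf p nu k else 0) (box p N))
  <= Ex p nu N g.
Proof. intros Hnu H0 H1. unfold Ex. apply sumR_map_le. intros k _.
  assert (0 <= joint_pmf p nu k) by (apply joint_nonneg; auto).
  destruct Rle_dec. specialize (H1 k r). nra. specialize (H0 k). nra. Qed.

Definition hind (nu : nat -> R) (s : R) (j m : nat) : R :=
  (if Rle_dec s (INR m - nu j) then 1 else 0) + (if Rle_dec (INR m - nu j) (- s) then 1 else 0).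

Lemma hind_nonneg nu s j m : 0 <= hind nu s j m.
Proof. unfold hind. destruct Rle_dec; destruct Rle_dec; lra. Qed.

Lemma hind_small nu s j m : hind nu s j m < 1 -> Rabs (INR m - nu j) < s.
Proof. unfold hind. intros H. destruct Rle_dec; destruct Rle_dec; try lra.
  apply Rabs_def1; lra. Qed.

Lemma up_bound nu V N s th E : 0 < nu <= V -> 0 <= th <= 1 ->
  V * (th^2/2 + th^3/6 + th^4/24 + th^5/40) - th * s <= E ->
  S1 (fun m => if Rle_dec s (INR m - nu) then 1 else 0) nu N <= exp E.
Proof. intros Hn Ht HE. eapply Rle_trans. apply (tail_up nu N s th); lra.
  apply exp_le. assert (h := phi_up th Ht). assert (0 <= exp th - 1 - th).
  { assert (h2 := exp_ineq1_le th). lra. }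
  nra. Qed.

Lemma lo_bound nu V N s th E : 0 < nu <= V -> 0 <= th ->
  V * (th^2/2) - th * s <= E ->
  S1 (fun m => if Rle_dec (INR m - nu) (- s) then 1 else 0) nu N <= exp E.
Proof. intros Hn Ht HE. eapply Rle_trans. apply (tail_lo nu N s th); lra.
  apply exp_le. assert (h := phi_lo th Ht). assert (0 <= exp (- th) - 1 + th).
  { assert (h2 := exp_ineq1_le (- th)). lra. }
  nra. Qed.

Lemma S1_hind (nu : nat -> R) j V N s th E : 0 < nu j <= V -> 0 <= th <= 1 ->
  V * (th^2/2 + th^3/6 + th^4/24 + th^5/40) - th * s <= E ->
  S1 (hind nu s j) (nu j) N <= 2 * exp E.
Proof. intros Hn Ht HE. unfold hind. rewrite S1_plus.
  assert (S1 (fun m => if Rle_dec s (INR m - nu j) then 1 else 0) (nu j) N <= exp E)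
    by (eapply (up_bound (nu j) V N s th); eauto).
  assert (S1 (fun m => if Rle_dec (INR m - nu j) (- s) then 1 else 0) (nu j) N <= exp E).
  { apply (lo_bound (nu j) V N s th); try lra. eapply Rle_trans; [|apply HE].
    assert (0 <= th^3) by (apply pow_le; lra). assert (0 <= th^4) by (apply pow_le; lra).
    assert (0 <= th^5) by (apply pow_le; lra). nra. }
  lra. Qed.


Lemma Rdiv_le_0_compat a b : 0 <= a -> 0 < b -> 0 <= a / b.
Proof. intros. unfold Rdiv. apply Rmult_le_pos; auto. left; apply Rinv_0_lt_compat; auto. Qed.

Lemma lam_exists w r P c V :
  0 < w -> 0 < r -> V = r ^ 2 -> 1 <= P -> 9/16 * w <= P -> 106/100 <= c * w ^ 2 ->
  0 < c <= 3816/10000 ->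
  exists lam, 0 <= lam /\ lam * (21/20 * w * r) ^ 2 <= 16/10 /\
    - lam * (V * P * w ^ 3) + P ^ 2 * (2 * (249/100) * lam ^ 2 * V ^ 2) <= - c * w ^ 2.
Proof.
  intros Hw Hr HV HP HPw Hcw Hc.
  assert (HV0 : 0 < V) by (subst; nra).
  set (B := 249/100). set (mu := 16/10). set (b2 := 441/400).
  assert (Hw2 : 0 < w ^ 2) by nra.
  assert (Hw5 : 0 < w ^ 5) by (apply pow_lt; lra).
  destruct (Rle_dec (4 * B * mu * P) (b2 * w ^ 5)) as [Ha|Hb].
  - exists (mu / (b2 * w ^ 2 * V)).
    assert (HL : 0 < mu / (b2 * w ^ 2 * V)).
    { unfold mu, b2. apply Rdiv_lt_0_compat. lra. apply Rmult_lt_0_compat; [|lra]. nra. }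
    split; [lra|]. split.
    + right. subst V. unfold mu, b2. field. split; lra.
    + set (L := mu / (b2 * w ^ 2 * V)) in *.
      assert (HL2 : L <= w ^ 3 / (4 * B * P * V)).
      { assert (E : w ^ 3 / (4 * B * P * V) - L = (b2 * w ^ 5 - 4 * B * mu * P) / (4 * B * P * V * b2 * w ^ 2)).
        { unfold L, B, mu, b2. field. repeat split; lra. }
        assert (0 <= (b2 * w ^ 5 - 4 * B * mu * P) / (4 * B * P * V * b2 * w ^ 2)).
        { apply Rdiv_le_0_compat. lra. unfold B, b2.
          assert (0 < P * V) by nra. assert (0 < P * V * w^2) by nra. nra. }
        lra. }
      assert (H2 : P ^ 2 * (2 * B * L ^ 2 * V ^ 2) <= L * (V * P * w ^ 3) / 2).
      { assert (2 * B * L * V ^ 2 * P ^ 2 <= V * P * w ^ 3 / 2).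
        { assert (0 <= 2 * B * V ^ 2 * P ^ 2) by (unfold B; assert (0 <= V^2 * P^2) by nra; nra).
          assert (2 * B * L * V ^ 2 * P ^ 2 <= 2 * B * V ^ 2 * P ^ 2 * (w ^ 3 / (4 * B * P * V))) by nra.
          replace (2 * B * V ^ 2 * P ^ 2 * (w ^ 3 / (4 * B * P * V))) with (V * P * w ^ 3 / 2) in H0.
          lra. unfold B. field. split; lra. }
        replace (P ^ 2 * (2 * B * L ^ 2 * V ^ 2)) with (L * (2 * B * L * V ^ 2 * P ^ 2)) by ring.
        replace (L * (V * P * w ^ 3) / 2) with (L * (V * P * w ^ 3 / 2)) by field.
        apply Rmult_le_compat_l; lra. }
      assert (H3 : L * (V * P * w ^ 3) / 2 = mu * P * w / (2 * b2)).
      { unfold L, mu, b2. field. repeat split; lra. }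
      assert (H4 : c * w ^ 2 <= mu * P * w / (2 * b2)).
      { replace (mu * P * w / (2 * b2)) with (16/10 * (400/882) * (P * w)) by (unfold mu, b2; field).
        assert (P * w >= 9/16 * (w * w)) by nra.
        assert (c * w ^ 2 <= 3816/10000 * w ^ 2) by (apply Rmult_le_compat_r; lra).
        simpl in *. lra. }
      replace (- L * (V * P * w ^ 3)) with (- (L * (V * P * w ^ 3))) by ring. lra.
  - exists (w ^ 3 / (4 * B * P * V)).
    assert (HL : 0 < w ^ 3 / (4 * B * P * V)).
    { apply Rdiv_lt_0_compat. apply pow_lt; lra. unfold B. nra. }
    split; [lra|]. split.
    + replace (w ^ 3 / (4 * B * P * V) * (21 / 20 * w * r) ^ 2) with (b2 * w ^ 5 / (4 * B * P)).
      2:{ subst V. unfold b2, B. field. split; lra. }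
      apply Rnot_le_lt in Hb. unfold B, mu, b2 in *.
      apply (Rmult_le_reg_r (4 * (249/100) * P)). lra.
      field_simplify; lra.
    + replace (- (w ^ 3 / (4 * B * P * V)) * (V * P * w ^ 3) + P ^ 2 * (2 * B * (w ^ 3 / (4 * B * P * V)) ^ 2 * V ^ 2))
        with (- (w ^ 2 * w ^ 4) / (8 * B)).
      2:{ unfold B. field. split; lra. }
      assert (Hc2 : 0 < c ^ 2) by nra.
      assert (c ^ 2 * (8 * B * c) <= c ^ 2 * w ^ 4).
      { assert (c ^ 3 <= 556/10000).
        { assert (c^2 <= (3816/10000)^2) by nra. simpl in *. nra. }
        assert ((c * w ^ 2) ^ 2 >= (106/100)^2) by nra.
        unfold B. simpl in *. nra. }
      assert (8 * B * c <= w ^ 4) by (apply (Rmult_le_reg_l (c^2)); auto).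
      unfold B in *.
      apply (Rmult_le_reg_r (8 * (249/100))). lra.
      replace (- (w ^ 2 * w ^ 4) / (8 * (249 / 100)) * (8 * (249 / 100))) with (- (w ^ 2 * w ^ 4)) by field.
      assert (w ^ 2 * (8 * (249/100) * c) <= w ^ 2 * w ^ 4) by (apply Rmult_le_compat_l; lra).
      nra.
Qed.


Lemma Xf_lt nu m s : Rabs (INR m - nu) < s -> Xf nu m < s ^ 2.
Proof. intros H. apply Rabs_def2 in H. unfold Xf. assert (0 <= INR m) by apply pos_INR.
  simpl. nra. Qed.

Lemma regime1 p nu V r v P c N :
  (1 <= p)%nat -> (forall j, (j < p)%nat -> 0 < nu j <= V) -> 0 < r -> r ^ 2 = V ->
  0 < v <= 966/1000 -> 1 <= P -> P ^ 2 = INR p -> P <= 9/16 * (v * r) ->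
  0 < c <= 3816/10000 ->
  sumR (map (fun k => if Rle_dec (V * P * (v * r) ^ 3) (stat p nu k) then joint_pmf p nu k else 0) (box p N))
  <= 2 * INR p * exp (- c * (v * r) ^ 2).
Proof.
  intros Hp Hnu Hr HV Hv HP HPp HPw Hc.
  set (s := 4/3 * (v * r) * r).
  assert (Hnu' : forall j, (j < p)%nat -> 0 < nu j) by (intros j Hj; apply Hnu; auto).
  eapply Rle_trans.
  apply (prob_le_Ex p nu N _ (fun k => sumR (map (fun j => hind nu s j (nth j k 0%nat)) (seq 0 p)))); auto.
  - intros k. apply sumR_map_nonneg. intros; apply hind_nonneg.
  - intros k Hk. destruct (Rlt_dec (sumR (map (fun j => hind nu s j (nth j k 0%nat)) (seq 0 p))) 1) as [Hlt|Hge]; [exfalso|lra].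
    assert (Hall : forall j, (j < p)%nat -> Xf (nu j) (nth j k 0%nat) < s ^ 2).
    { intros j Hj. apply Xf_lt. apply hind_small.
      apply (sumR_lt1 (fun j => hind nu s j (nth j k 0%nat)) (seq 0 p)); auto.
      intros; apply hind_nonneg. apply in_seq; lia. }
    rewrite stat_sum in Hk.
    assert (H1 := sumR_lt_p _ _ p Hp Hall).
    assert (INR p * s ^ 2 <= V * P * (v * r) ^ 3).
    { rewrite <- HPp, <- HV. unfold s.
      assert (0 <= P * (v*r)^2 * r^2) by (apply Rmult_le_pos; [apply Rmult_le_pos|]; [lra| apply pow2_ge_0| apply pow2_ge_0]).
      replace (P ^ 2 * (4 / 3 * (v * r) * r) ^ 2) with ((P * (v*r)^2 * r^2) * (P * (16/9))) by field.
      replace (r ^ 2 * P * (v * r) ^ 3) with ((P * (v*r)^2 * r^2) * (v * r)) by field.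
      apply Rmult_le_compat_l; auto. lra. }
    lra.
  - eapply Rle_trans. apply Ex_coord; auto. intros; apply hind_nonneg.
    eapply Rle_trans. apply (sumR_map_le _ (fun _ => 2 * exp (- c * (v * r) ^ 2))).
    + intros j Hj. apply in_seq in Hj. apply (S1_hind nu j V N s v). apply Hnu; lia. lra.
      rewrite <- HV. unfold s.
      assert (Hin : 1/2 + v/6 + v^2/24 + v^3/40 - 4/3 + c <= 0).
      { assert (v^2 <= 1) by nra. assert (v^3 <= 1) by (simpl; nra). nra. }
      assert (0 <= r^2 * v^2) by (apply Rmult_le_pos; apply pow2_ge_0).
      replace (- c * (v * r) ^ 2) with ((r^2 * v^2) * (- c)) by field.
      replace (r ^ 2 * (v ^ 2 / 2 + v ^ 3 / 6 + v ^ 4 / 24 + v ^ 5 / 40) - v * (4 / 3 * (v * r) * r))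
        with ((r^2 * v^2) * (1/2 + v/6 + v^2/24 + v^3/40 - 4/3)) by field.
      apply Rmult_le_compat_l; auto. lra.
    + rewrite sumR_const, length_seq. lra.
Qed.


Lemma regime2 p nu V r v P c N :
  (1 <= p)%nat -> (forall j, (j < p)%nat -> 0 < nu j <= V) -> 0 < r -> r ^ 2 = V ->
  0 < v <= 966/1000 -> 1 <= P -> P ^ 2 = INR p -> 9/16 * (v * r) <= P ->
  0 < c <= 3816/10000 -> 106/100 <= c * (v * r) ^ 2 ->
  sumR (map (fun k => if Rle_dec (V * P * (v * r) ^ 3) (stat p nu k) then joint_pmf p nu k else 0) (box p N))
  <= (2 * INR p + 1) * exp (- c * (v * r) ^ 2).
Proof.
  intros Hp Hnu Hr HV Hv HP HPp HPw Hc Hcw.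
  assert (Hnu' : forall j, (j < p)%nat -> 0 < nu j) by (intros j Hj; apply Hnu; auto).
  set (w := v * r) in *.
  assert (Hw : 0 < w) by (unfold w; nra).
  set (A := 21/20 * w * r).
  destruct (lam_exists w r P c V Hw Hr (eq_sym HV) HP HPw Hcw Hc) as [lam [Hl0 [HlA Hexp]]].
  set (t := V * P * w ^ 3).
  set (fmid := fun j m => if Rlt_dec (Rabs (INR m - nu j)) A then exp (lam * Xf (nu j) m) else 0).
  assert (Hfm : forall j m, 0 <= fmid j m).
  { intros j m. unfold fmid. destruct Rlt_dec. left; apply exp_pos. lra. }
  eapply Rle_trans.
  apply (prob_le_Ex p nu N _ (fun k => sumR (map (fun j => hind nu A j (nth j k 0%nat)) (seq 0 p))
      + exp (- lam * t) * prodR (map (fun j => fmid j (nth j k 0%nat)) (seq 0 p)))); auto.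
  - intros k. assert (0 <= sumR (map (fun j => hind nu A j (nth j k 0%nat)) (seq 0 p)))
      by (apply sumR_map_nonneg; intros; apply hind_nonneg).
    assert (0 <= prodR (map (fun j => fmid j (nth j k 0%nat)) (seq 0 p)))
      by (apply prodR_map_nonneg; intros; apply Hfm).
    assert (0 < exp (- lam * t)) by apply exp_pos. nra.
  - intros k Hk.
    assert (0 <= prodR (map (fun j => fmid j (nth j k 0%nat)) (seq 0 p)))
      by (apply prodR_map_nonneg; intros; apply Hfm).
    assert (0 < exp (- lam * t)) by apply exp_pos.
    destruct (Rlt_dec (sumR (map (fun j => hind nu A j (nth j k 0%nat)) (seq 0 p))) 1) as [Hlt|Hge]; [|nra].
    assert (0 <= sumR (map (fun j => hind nu A j (nth j k 0%nat)) (seq 0 p)))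
      by (apply sumR_map_nonneg; intros; apply hind_nonneg).
    assert (Hpr : prodR (map (fun j => fmid j (nth j k 0%nat)) (seq 0 p)) = exp (lam * stat p nu k)).
    { rewrite stat_sum, <- sumR_map_scal, exp_sumR. f_equal. apply map_ext_in. intros j Hj.
      unfold fmid. destruct Rlt_dec as [_|n]; auto. exfalso. apply n. apply hind_small.
      apply (sumR_lt1 (fun j => hind nu A j (nth j k 0%nat)) (seq 0 p)); auto.
      intros; apply hind_nonneg. }
    rewrite Hpr, <- exp_plus.
    assert (1 <= exp (- lam * t + lam * stat p nu k)).
    { rewrite <- exp_0. apply exp_le. nra. }
    lra.
  - rewrite Ex_plus, Ex_scal. eapply Rle_trans. apply Rplus_le_compat.
    + apply Ex_coord; auto. intros; apply hind_nonneg.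
    + apply Rmult_le_compat_l. left; apply exp_pos. right. apply Ex_prod.
    +
      assert (Ht : sumR (map (fun j => S1 (hind nu A j) (nu j) N) (seq 0 p)) <= INR p * (2 * exp (- c * w ^ 2))).
      { eapply Rle_trans. apply (sumR_map_le _ (fun _ => 2 * exp (- c * w ^ 2))).
        - intros j Hj. apply in_seq in Hj. apply (S1_hind nu j V N A (4/5 * v)). apply Hnu; lia. lra.
          rewrite <- HV. unfold A, w.
          assert (Hin : 32/100 + (4/5)^3 * v/6 + (4/5)^4 * v^2/24 + (4/5)^5 * v^3/40 - 84/100 + c <= 0).
          { destruct Hv as [Hv0 Hv1]. assert (Hv2 : v*v <= 966/1000*v) by (apply Rmult_le_compat_r; lra). assert (Hv3 : v*v*v <= v*v*(966/1000)) by (apply Rmult_le_compat_l; nra). simpl; lra. }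
          assert (0 <= r^2 * v^2) by (apply Rmult_le_pos; apply pow2_ge_0).
          replace (- c * (v * r) ^ 2) with ((r^2 * v^2) * (- c)) by field.
          replace (r ^ 2 * ((4 / 5 * v) ^ 2 / 2 + (4 / 5 * v) ^ 3 / 6 + (4 / 5 * v) ^ 4 / 24 + (4 / 5 * v) ^ 5 / 40) - 4 / 5 * v * (21 / 20 * (v * r) * r))
            with ((r^2 * v^2) * (32/100 + (4/5)^3 * v/6 + (4/5)^4 * v^2/24 + (4/5)^5 * v^3/40 - 84/100)) by field.
          apply Rmult_le_compat_l; auto. lra.
        - rewrite sumR_const, length_seq. lra. }
      set (K := 2 * (249/100) * lam ^ 2 * V ^ 2).
      assert (Hm : prodR (map (fun j => S1 (fmid j) (nu j) N) (seq 0 p)) <= exp (K * INR p)).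
      { rewrite exp_INR_mult. replace (exp K ^ p) with (prodR (map (fun _ => exp K) (seq 0 p))) by (rewrite prodR_const, length_seq; reflexivity).
        apply prodR_map_le. intros j Hj. apply in_seq in Hj. split.
        - apply S1_nonneg. left; apply Hnu'; lia. auto.
        - eapply Rle_trans. apply (middle (nu j) N A lam (16/10) (249/100)); auto.
          + apply Hnu'; lia.
          + unfold A. assert (w^2 >= 2).
            { assert (c * w ^2 <= 3816/10000 * w^2) by (apply Rmult_le_compat_r; [apply pow2_ge_0|lra]). lra. }
            assert (r >= w) by (unfold w; nra).
            assert (w * r >= 1) by (simpl in *; nra). nra.
          + lra.
          + apply Bern.
          + assert (nu j <= V) by (apply Hnu; lia). assert (0 < nu j) by (apply Hnu; lia).
            assert (nu j ^ 2 <= V ^ 2) by (simpl; nra).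
            assert (0 <= 2 * (249/100) * lam ^ 2) by (assert (0 <= lam^2) by apply pow2_ge_0; lra).
            eapply Rle_trans; [| apply exp_ineq1_le]. unfold K. nra. }
      assert (Hfin : exp (- lam * t) * exp (K * INR p) <= exp (- c * w ^ 2)).
      { rewrite <- exp_plus. apply exp_le. rewrite <- HPp. unfold K, t. lra. }
      assert (0 < exp (- lam * t)) by apply exp_pos.
      assert (exp (- lam * t) * prodR (map (fun j => S1 (fmid j) (nu j) N) (seq 0 p)) <= exp (- c * w ^ 2)).
      { eapply Rle_trans; [|apply Hfin]. apply Rmult_le_compat_l; lra. }
      lra.
Qed.


Lemma fold_max_ge l : forall x, In x l -> x <= fold_right Rmax 0 l.
Proof. induction l; simpl; intros x H. destruct H.
  destruct H. subst. apply Rmax_l. eapply Rle_trans. apply IHl; auto. apply Rmax_r. Qed.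

Lemma Rpower_pos x y : 0 < Rpower x y.
Proof. unfold Rpower. apply exp_pos. Qed.

Lemma Rpower_nat x n : 0 < x -> Rpower x (INR n) = x ^ n.
Proof. apply Rpower_pow. Qed.

Lemma trivial_bound p nu N :
  (forall j, (j < p)%nat -> 0 < nu j) ->
  forall t, sumR (map (fun k => if Rle_dec t (stat p nu k) then joint_pmf p nu k else 0) (box p N)) <= 1.
Proof. intros Hnu t. eapply Rle_trans. apply (prob_le_Ex p nu N t (fun k => prodR (map (fun j => (fun _ _ => 1) j (nth j k 0%nat)) (seq 0 p)))); auto.
  - intros k. apply prodR_map_nonneg. intros; lra.
  - intros k _. right. simpl. rewrite prodR_const. symmetry. apply pow1.
  - eapply Rle_trans; [right; exact (Ex_prod p nu N (fun _ _ => 1)) | ].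
    eapply Rle_trans; [apply (prodR_map_le _ (fun _ => 1)) | right; rewrite prodR_const; apply pow1].
    intros j Hj. apply in_seq in Hj. split. apply S1_nonneg. left; apply Hnu; lia. intros; lra.
    apply S1_one. left; apply Hnu; lia. Qed.

Theorem lemma2p2 (p : nat) (nu : nat -> R) (u : R)
  (hp : (1 <= p)%nat)
  (hnu : forall j, (j < p)%nat -> 0 < nu j)
  (hu1 : Rpower (nu_inf p nu) (- (3 / 2)) <= u)
  (hu2 : u <= 9 / 10 * Rpower (nu_inf p nu) (3 / 2)) :
  let t := nu_inf p nu * sqrt (INR p) * u in
  let c := Rpower 12 (1 / 3) / 6 in
  prob_le p nu (fun k => t <= stat p nu k) (stat_ge_dec p nu t)
    ((2 * INR p + 1) * exp (- c * Rpower u (2 / 3))).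
Proof.
  intros t c. unfold prob_le, stat_ge_dec. intros N.
  set (V := nu_inf p nu) in *.
  assert (HnuV : forall j, (j < p)%nat -> 0 < nu j <= V).
  { intros j Hj. split. auto. apply fold_max_ge. apply in_map. apply in_seq. lia. }
  assert (HV : 0 < V). { destruct (HnuV 0%nat) as [h1 h2]. lia. lra. }
  set (r := sqrt V).
  assert (Hr : 0 < r) by (apply sqrt_lt_R0; auto).
  assert (Hr2 : r ^ 2 = V) by (apply pow2_sqrt; lra).
  assert (Hu : 0 < u) by (eapply Rlt_le_trans; [apply Rpower_pos| apply hu1]).
  set (w := Rpower u (1/3)).
  assert (Hw : 0 < w) by apply Rpower_pos.
  assert (Hw3 : w ^ 3 = u).
  { unfold w. rewrite <- Rpower_nat by apply Rpower_pos. rewrite Rpower_mult.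
    replace (1/3 * INR 3) with 1 by (simpl; field). apply Rpower_1; auto. }
  assert (Hw2 : Rpower u (2/3) = w ^ 2).
  { unfold w. rewrite <- Rpower_nat by apply Rpower_pos. rewrite Rpower_mult.
    f_equal. simpl. field. }
  assert (HV32 : Rpower V (3/2) = r ^ 3).
  { rewrite <- Hr2. rewrite <- Rpower_nat by auto. rewrite Rpower_mult.
    replace (INR 2 * (3/2)) with (INR 3) by (simpl; field). rewrite Rpower_nat by auto. reflexivity. }
  set (v := w / r).
  assert (Hwv : w = v * r) by (unfold v; field; lra).
  assert (Hv0 : 0 < v) by (unfold v; apply Rdiv_lt_0_compat; auto).
  assert (Hv1 : v <= 966/1000).
  { rewrite HV32, <- Hw3, Hwv in hu2.
    assert (v ^ 3 <= 9/10).
    { assert (0 < r^3) by (apply pow_lt; auto).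
      apply (Rmult_le_reg_r (r^3)); auto. replace ((v * r)^3) with (v^3 * r^3) in hu2 by ring. lra. }
    destruct (Rle_dec v (966/1000)); auto. exfalso.
    assert (v > 966/1000) by lra. assert (v*v > 966/1000 * (966/1000)) by nra.
    assert (v*v*v > 966/1000 * (966/1000) * (966/1000)) by nra. simpl in *. lra. }
  set (g := Rpower 12 (1/3)).
  assert (Hg3 : g ^ 3 = 12).
  { unfold g. rewrite <- Rpower_nat by apply Rpower_pos. rewrite Rpower_mult.
    replace (1/3 * INR 3) with 1 by (simpl; field). apply Rpower_1; lra. }
  assert (Hg : 0 < g) by apply Rpower_pos.
  assert (Hc : 0 < c <= 3816/10000).
  { unfold c. fold g. split. lra.
    destruct (Rle_dec g (22896/10000)). lra. exfalso.
    assert (g*g > 22896/10000 * (22896/10000)) by nra.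
    assert (g*g*g > 22896/10000 * (22896/10000) * (22896/10000)) by nra. simpl in *. lra. }
  set (P := sqrt (INR p)).
  assert (HP : 1 <= P). { rewrite <- sqrt_1. apply sqrt_le_1_alt. apply (le_INR 1). auto. }
  assert (HP2 : P ^ 2 = INR p) by (apply pow2_sqrt; apply pos_INR).
  assert (Ht : t = V * P * (v * r) ^ 3) by (unfold t; rewrite <- Hwv, Hw3; reflexivity).
  rewrite Hw2, Hwv, Ht.
  destruct (Rlt_dec (c * (v * r) ^ 2) (106/100)) as [Hsmall|Hbig].
  - eapply Rle_trans. apply trivial_bound. auto.
    assert (exp (- c * (v * r) ^ 2) >= 1/3).
    { assert (exp (c * (v * r)^2) <= 3).
      { eapply Rle_trans; [| apply exp_106]. apply exp_le. lra. }
      replace (- c * (v * r) ^ 2) with (- (c * (v * r) ^ 2)) by ring. rewrite exp_Ropp.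
      assert (0 < exp (c * (v * r) ^ 2)) by apply exp_pos.
      apply Rle_ge. apply (Rmult_le_reg_l (exp (c * (v * r) ^ 2))); auto.
      rewrite Rinv_r by lra. lra. }
    assert (1 <= INR p) by (apply (le_INR 1); auto). nra.
  - apply Rnot_lt_le in Hbig.
    destruct (Rle_dec P (9/16 * (v * r))) as [H1|H2].
    + eapply Rle_trans. apply (regime1 p nu V r v P c N); auto; lra.
      assert (0 < exp (- c * (v * r) ^ 2)) by apply exp_pos. lra.
    + apply (regime2 p nu V r v P c N); auto; lra.
Qed.
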